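(* Let $X$ be a connected locally compact Polish space and $B\subseteq X$ dense. If $\succeq$ and $\succeq'$ are continuous preferences on $X$ with $\succeq\cap(B\times B)=\succeq'\cap(B\times B)$, then $\succeq=\succeq'$.
   Context: A preference is a complete and transitive binary relation on $X$; it is continuous if it is a closed subset of $X\times X$. *)

(* Defs.v *)
From HB Require Import structures.
From mathcomp Require Import all_boot all_order all_algebra.
From mathcomp Require Import all_classical all_reals all_analysis.
From mathcomp Require Import Rstruct Rstruct_topology.
Set Implicit Arguments. Unset Strict Implicit. Unset Printing Implicit Defensive.
Import Order.TTheory GRing.Theory Num.Theory.
Local Open Scope classical_set_scope.
Local Open Scope ring_scope.

Definition separable_space (X : topologicalType) : Prop :=
  exists D : set X, countable D /\ dense D.

Definition completely_metrizable (X : topologicalType) : Prop :=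
  exists d : X -> X -> Rdefinitions.R,
    (forall x y, 0 <= d x y) /\
    (forall x y, d x y = 0 <-> x = y) /\
    (forall x y, d x y = d y x) /\
    (forall x y z, d x z <= d x y + d y z) /\
    (forall A : set X,
        open A <-> (forall x, A x -> exists e : Rdefinitions.R,
                       0 < e /\ [set y | d x y < e] `<=` A)) /\
    (forall u : nat -> X,
        (forall e : Rdefinitions.R, 0 < e -> exists N : nat,
            forall m n : nat, (N <= m)%N -> (N <= n)%N -> d (u m) (u n) < e) ->
        exists l : X, u @ \oo --> l).

Definition polish (X : topologicalType) : Prop :=
  separable_space X /\ completely_metrizable X.

(* A preference on X: a complete and transitive binary relation on X,
   viewed as a subset of X * X ((x,y) in P means x ⪰ y). *)
Definition preference (X : Type) (P : set (X * X)) : Prop :=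
  (forall x y : X, P (x, y) \/ P (y, x)) /\
  (forall x y z : X, P (x, y) -> P (y, z) -> P (x, z)).

Definition continuous_preference (X : topologicalType) (P : set (X * X)) : Prop :=
  preference P /\ closed P.

(* Main.v *)
Require Import Defs.
From mathcomp Require Import all_boot all_order all_algebra.
From mathcomp Require Import all_classical all_reals all_analysis.
Local Open Scope classical_set_scope.

Lemma cont_l (X : topologicalType) (c : X) : continuous (fun s : X => (s, c)).
Proof. move=> s; apply: cvg_pair; [exact: cvg_id | exact: cvg_cst]. Qed.
Lemma cont_r (X : topologicalType) (c : X) : continuous (fun s : X => (c, s)).
Proof. move=> s; apply: cvg_pair; [exact: cvg_cst | exact: cvg_id]. Qed.

Lemma open_secl (X : topologicalType) (W : set (X * X)) c :
  open W -> open [set s | W (s, c)].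
Proof. move=> oW; by move/continuousP: (@cont_l X c); apply. Qed.
Lemma open_secr (X : topologicalType) (W : set (X * X)) c :
  open W -> open [set s | W (c, s)].
Proof. move=> oW; by move/continuousP: (@cont_r X c); apply. Qed.
Lemma closed_secl (X : topologicalType) (W : set (X * X)) c :
  closed W -> closed [set s | W (s, c)].
Proof. move=> oW; by move/continuous_closedP: (@cont_l X c); apply. Qed.
Lemma closed_secr (X : topologicalType) (W : set (X * X)) c :
  closed W -> closed [set s | W (c, s)].
Proof. move=> oW; by move/continuous_closedP: (@cont_r X c); apply. Qed.

Lemma weak_of (X : topologicalType) (B : set X) (P Q : set (X * X)) :
  dense B -> continuous_preference P -> continuous_preference Q ->
  P `&` (B `*` B) = Q `&` (B `*` B) ->
  forall u v, ~ Q (v, u) -> P (u, v).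
Proof.
move=> dB [[cP tP] clP] [[cQ tQ] clQ] E u v nQ.
apply: contrapT => nP.
have oQ := closed_openC clQ. have oP := closed_openC clP.
have [b [[/= nQb nPb] Bb]] : ([set s | (~` Q) (s, u)] `&` [set s | (~` P) (u, s)]) `&` B !=set0.
  apply: dB; first by exists v.
  by apply: openI; [apply: open_secl | apply: open_secr].
have [c [[/= nQc nPc] Bc]] : ([set t | (~` Q) (b, t)] `&` [set t | (~` P) (t, b)]) `&` B !=set0.
  apply: dB; first by exists u.
  by apply: openI; [apply: open_secr | apply: open_secl].
have Pbc : P (b, c) by case: (cP b c).
have : (P `&` (B `*` B)) (b, c) by split.
by rewrite E => -[].
Qed.

Lemma between (X : topologicalType) (B : set X) (Q : set (X * X)) :
  connected [set: X] -> dense B -> continuous_preference Q ->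
  forall x y, ~ Q (x, y) -> exists b, B b /\ ~ Q (x, b) /\ ~ Q (b, y).
Proof.
move=> cX dB [[cQ tQ] clQ] x y nQ.
have oQ := closed_openC clQ.
have [M|M] := pselect ([set z | ~ Q (x, z) /\ ~ Q (z, y)] !=set0).
  have [b [[/= h1 h2] Bb]] := dB ([set z | (~` Q) (x, z)] `&` [set z | (~` Q) (z, y)]) M ltac:(by apply: openI; [apply: open_secr | apply: open_secl]).
  by exists b.
exfalso.
have K : [set z | Q (x, z)] = ~` [set z | Q (z, y)].
  apply/seteqP; split => z /=.
    by move=> h1 h2; apply: nQ; exact: tQ h1 h2.
  move=> h; apply: contrapT => h'; apply: M; by exists z.
have Qxx : Q (x, x) by case: (cQ x x).
have oK : open [set z | Q (x, z)].
  rewrite K; apply: closed_openC; exact: (@closed_secl X Q y clQ).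
have cK : closed [set z | Q (x, z)] by exact: (@closed_secr X Q x clQ).
have := cX [set z | Q (x, z)] (ex_intro _ x Qxx).
move=> /(_ (ex_intro2 _ _ _ oK (esym (setTI _))) (ex_intro2 _ _ _ cK (esym (setTI _)))).
by move=> /(congr1 (fun S => S y)) /= h; apply: nQ; rewrite h.
Qed.

Lemma incl (X : topologicalType) (B : set X) (P Q : set (X * X)) :
  connected [set: X] -> dense B ->
  continuous_preference P -> continuous_preference Q ->
  P `&` (B `*` B) = Q `&` (B `*` B) -> P `<=` Q.
Proof.
move=> cX dB hP hQ E [x y] Pxy; apply: contrapT => nQ.
have W := @weak_of X B P Q dB hP hQ E.
have [b [Bb [nQxb nQby]]] := @between X B Q cX dB hQ _ _ nQ.
have Pyb := W _ _ nQby.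
have Pxb : P (x, b) by case: hP => -[_ tP] _; exact: tP Pxy Pyb.
have [c [Bc [nQxc nQcb]]] := @between X B Q cX dB hQ _ _ nQxb.
have Pcx := W _ _ nQxc.
have Pcb : P (c, b) by case: hP => -[_ tP] _; exact: tP Pcx Pxb.
have : (P `&` (B `*` B)) (c, b) by split.
by rewrite E => -[].
Qed.

Theorem theorem13 (X : topologicalType) (B : set X) (P Q : set (X * X)) :
  connected [set: X] -> locally_compact [set: X] -> polish X ->
  dense B ->
  continuous_preference P -> continuous_preference Q ->
  P `&` (B `*` B) = Q `&` (B `*` B) ->
  P = Q.
Proof.
move=> cX _ _ dB hP hQ E.
apply/seteqP; split; first exact: @incl X B _ _ cX dB hP hQ E.
exact: @incl X B _ _ cX dB hQ hP (esym E).
Qed.
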